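(* For terms $\Gamma\vdash s,t:X$ of the language $\mathbf P$, $s\approx_{\mathbf P}t$ if and only if $[\![s]\!]=[\![t]\!]$ as subprobability kernels $[\![\Gamma]\!]\to D_{\le1}([\![X]\!])$. That is, $\mathrm{FinSubStoch}$ is fully abstract for $\mathbf P$.
   Context: $\mathbf{PSL}$ is the first-order language with types $A::=X\mid\mathsf{unit}\mid A\ast A$ ($X$ ranging over finite sets) and terms $t::=x\mid()\mid(t,t)\mid\pi_i t\mid \underline f(t)\mid\mathrm{let}\ x=t_1\ \mathrm{in}\ t_2$, where $\underline f:A\to B$ ranges over all subprobability kernels between the finite sets interpreting $A,B$ (including scoring and exact conditioning). $\mathbf P$ extends $\mathbf{PSL}$ with $\mathrm{if}\ t_1\ \mathrm{then}\ t_2\ \mathrm{else}\ t_3$ (with $\Gamma\vdash t_1:2$, $\Gamma\vdash t_2,t_3:A$). Types denote finite sets ($[\![\mathsf{unit}]\!]=\{*\}$, $[\![A\ast B]\!]=[\![A]\!]\times[\![B]\!]$) and terms $\Gamma\vdash t:A$ denote subprobability kernels: $[\![x]\!](a|\gamma)=[a=\gamma_x]$; $[\![()]\!]( *|\gamma)=1$; $[\![(s,t)]\!]((a,b)|\gamma)=[\![s]\!](a|\gamma)[\![t]\!](b|\gamma)$; $[\![\pi_1t]\!](a|\gamma)=\sum_b[\![t]\!]((a,b)|\gamma)$ (similarly $\pi_2$); $[\![\underline f(t)]\!](b|\gamma)=\sum_af(b|a)[\![t]\!](a|\gamma)$; $[\![\mathrm{let}\ x=s\ \mathrm{in}\ t]\!](b|\gamma)=\sum_a[\![s]\!](a|\gamma)[\![t]\!](b|\gamma,a)$;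 $[\![\mathrm{if}\ t_1\ \mathrm{then}\ t_2\ \mathrm{else}\ t_3]\!](a|\gamma)=[\![t_2]\!](a|\gamma)[\![t_1]\!](\mathrm{true}|\gamma)+[\![t_3]\!](a|\gamma)[\![t_1]\!](\mathrm{false}|\gamma)$. For a subdistribution $\varphi$, $\mathsf{normalize}(\varphi)=\varphi/Z$ with $Z=\sum_x\varphi(x)$ if $Z\ne0$, and $0$ otherwise. Closed $s,t$ are observationally equivalent, $s\approx t$, if $\mathsf{normalize}([\![s]\!])=\mathsf{normalize}([\![t]\!])$. Open terms are branching equivalent, $s\approx_{\mathbf P}t$, if $C[s]\approx C[t]$ for every closed well-typed $\mathbf P$ context $C[-]$. *)

(* Defs.v *)
From HB Require Import structures.
From mathcomp Require Import all_boot all_order all_algebra.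
From mathcomp Require Import reals.
Set Implicit Arguments. Unset Strict Implicit. Unset Printing Implicit Defensive.
Import Order.TTheory GRing.Theory Num.Theory.
Local Open Scope ring_scope.

Inductive ty : Type :=
| TFin : nat -> ty
| TUnit : ty
| TProd : ty -> ty -> ty.

Fixpoint tden (A : ty) : finType :=
  match A with
  | TFin n => 'I_n
  | TUnit => unit
  | TProd A B => (tden A * tden B)%type
  end.

Definition TBool : ty := TFin 2.
Definition btrue : tden TBool := @Ordinal 2 1 isT.
Definition bfalse : tden TBool := @Ordinal 2 0 isT.

(** Typing contexts (de Bruijn): a list of types, head = most recent variable. *)
Fixpoint cden (G : seq ty) : finType :=
  match G with
  | [::] => unit
  | A :: G' => (tden A * cden G')%type
  end.

Inductive var : seq ty -> ty -> Type :=
| VZ : forall G A, var (A :: G) A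
| VS : forall G A B, var G A -> var (B :: G) A.

Fixpoint lookup G A (v : var G A) : cden G -> tden A :=
  match v in var G A return cden G -> tden A with
  | VZ _ _ => fun e => e.1
  | VS _ _ _ v' => fun e => lookup v' e.2
  end.

Section Lang.
Variable R : realType.

(** Subprobability kernels X -> D_{<=1}(Y) between finite sets;
    kfun x y is f(y|x). *)
Record kern (X Y : finType) := Kern {
  kfun : X -> Y -> R;
  kfun_ge0 : forall x y, 0 <= kfun x y;
  kfun_sub : forall x, \sum_(y : Y) kfun x y <= 1
}.

(** Intrinsically typed terms of the language P (PSL + if-then-else). *)
Inductive tm : seq ty -> ty -> Type :=
| tvar : forall G A, var G A -> tm G A
| tunit : forall G, tm G TUnit
| tpair : forall G A B, tm G A -> tm G B -> tm G (TProd A B)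
| tfst : forall G A B, tm G (TProd A B) -> tm G A
| tsnd : forall G A B, tm G (TProd A B) -> tm G B
| tprim : forall G A B, kern (tden A) (tden B) -> tm G A -> tm G B
| tlet : forall G A B, tm G A -> tm (A :: G) B -> tm G B
| tif : forall G A, tm G TBool -> tm G A -> tm G A -> tm G A.

Fixpoint sem G A (t : tm G A) : cden G -> tden A -> R :=
  match t in tm G A return cden G -> tden A -> R with
  | tvar _ _ v => fun g a => (a == lookup v g)%:R
  | tunit _ => fun _ _ => 1
  | tpair _ _ _ s u => fun g ab => sem s g ab.1 * sem u g ab.2
  | tfst _ _ B u => fun g a => \sum_(b : tden B) sem u g (a, b)
  | tsnd _ A _ u => fun g b => \sum_(a : tden A) sem u g (a, b)
  | tprim _ A _ f u => fun g b => \sum_(a : tden A) kfun f a b * sem u g a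
  | tlet _ A _ s u => fun g b => \sum_(a : tden A) sem s g a * sem u (a, g) b
  | tif _ _ c u v => fun g a =>
      sem u g a * sem c g btrue + sem v g a * sem c g bfalse
  end.

(** Contexts: ctx G A D B is a term of type D |- B with one hole of type G |- A. *)
Inductive ctx (G : seq ty) (A : ty) : seq ty -> ty -> Type :=
| chole : ctx G A G A
| cpair1 : forall D B C, ctx G A D B -> tm D C -> ctx G A D (TProd B C)
| cpair2 : forall D B C, tm D B -> ctx G A D C -> ctx G A D (TProd B C)
| cfst : forall D B C, ctx G A D (TProd B C) -> ctx G A D B
| csnd : forall D B C, ctx G A D (TProd B C) -> ctx G A D C
| cprim : forall D B C, kern (tden B) (tden C) -> ctx G A D B -> ctx G A D C
| clet1 : forall D B C, ctx G A D B -> tm (B :: D) C -> ctx G A D C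
| clet2 : forall D B C, tm D B -> ctx G A (B :: D) C -> ctx G A D C
| cif1 : forall D B, ctx G A D TBool -> tm D B -> tm D B -> ctx G A D B
| cif2 : forall D B, tm D TBool -> ctx G A D B -> tm D B -> ctx G A D B
| cif3 : forall D B, tm D TBool -> tm D B -> ctx G A D B -> ctx G A D B.

Fixpoint plug G A D B (C : ctx G A D B) (s : tm G A) : tm D B :=
  match C in ctx _ _ D B return tm D B with
  | chole => s
  | cpair1 _ _ _ C' u => tpair (plug C' s) u
  | cpair2 _ _ _ u C' => tpair u (plug C' s)
  | cfst _ _ _ C' => tfst (plug C' s)
  | csnd _ _ _ C' => tsnd (plug C' s)
  | cprim _ _ _ f C' => tprim f (plug C' s)
  | clet1 _ _ _ C' u => tlet (plug C' s) u
  | clet2 _ _ _ u C' => tlet u (plug C' s)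
  | cif1 _ _ C' u v => tif (plug C' s) u v
  | cif2 _ _ c C' v => tif c (plug C' s) v
  | cif3 _ _ c u C' => tif c u (plug C' s)
  end.

Definition normalize (X : finType) (phi : X -> R) : X -> R :=
  fun x => let Z := \sum_(y : X) phi y in
           if Z == 0 then 0 else phi x / Z.

Definition obs_equiv B (s t : tm [::] B) : Prop :=
  forall b, normalize (sem s tt) b = normalize (sem t tt) b.

Definition branch_equiv G A (s t : tm G A) : Prop :=
  forall B (C : ctx G A [::] B), obs_equiv (plug C s) (plug C t).

End Lang.

(* Main.v *)
Require Import Defs.
From HB Require Import structures.
From mathcomp Require Import all_boot all_order all_algebra.
From mathcomp Require Import reals.
From Stdlib Require Import FunctionalExtensionality.
From mathcomp Require Import ring lra.
Set Implicit Arguments. Unset Strict Implicit. Unset Printing Implicit Defensive.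
Import Order.TTheory GRing.Theory Num.Theory.
Local Open Scope ring_scope.

Section Aux.
Variable R : realType.

Lemma sum_eq1 (X : finType) (x0 : X) (F : X -> R) :
  \sum_(a : X) (a == x0)%:R * F a = F x0.
Proof.
rewrite (bigD1 x0) //= eqxx mul1r big1 ?addr0 // => a /negbTE ->.
by rewrite mul0r.
Qed.

Lemma big_unit (F : unit -> R) : \sum_(u : unit) F u = F tt.
Proof. by rewrite (bigD1 tt) //= big1 ?addr0 // => -[]; rewrite eqxx. Qed.

Definition detf (X Y : finType) (f : X -> option Y) : X -> Y -> R :=
  fun x y => (f x == Some y)%:R.

Lemma detf_ge0 (X Y : finType) (f : X -> option Y) x y : 0 <= detf f x y.
Proof. by rewrite /detf ler0n. Qed.

Lemma detf_sub (X Y : finType) (f : X -> option Y) x : \sum_y detf f x y <= 1.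
Proof.
rewrite /detf; case: (f x) => [y0|].
  rewrite (bigD1 y0) //= eqxx big1 ?addr0 // => y hy.
  suff -> : (Some y0 == Some y) = false by [].
  by apply/negbTE; apply: contra hy => /eqP [] ->.
by rewrite big1.
Qed.

Definition detk (X Y : finType) (f : X -> option Y) : kern R X Y :=
  Kern (@detf_ge0 X Y f) (@detf_sub X Y f).

Definition coinf : unit -> tden TBool -> R := fun _ _ => 2^-1.

Lemma coin_ge0 x y : 0 <= coinf x y.
Proof. by rewrite /coinf invr_ge0 ler0n. Qed.

Lemma coin_sub x : \sum_y coinf x y <= 1.
Proof.
rewrite /coinf sumr_const card_ord -[_ *+ 2]mulr_natr mulVf //.
by rewrite pnatr_eq0.
Qed.

Definition coin : kern R unit (tden TBool) := Kern coin_ge0 coin_sub.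

Definition cst D X (x : tden X) : tm R D X :=
  @tprim R D TUnit X (@detk (tden TUnit) (tden X) (fun _ => Some x)) (@tunit R D).

Lemma sem_cst D X (x : tden X) g a : sem (cst D x) g a = (a == x)%:R.
Proof.
rewrite /= big_unit /detf mulr1.
by rewrite (inj_eq (@Some_inj _)) eq_sym.
Qed.

End Aux.

Section Main.
Variable R : realType.

Lemma sem_ge0 G A (t : tm R G A) g a : 0 <= sem t g a.
Proof.
elim: t g a => /=.
- by move=> *; rewrite ler0n.
- by move=> *; rewrite ler01.
- by move=> G0 A0 B s1 IH1 s2 IH2 g a; rewrite mulr_ge0.
- by move=> G0 A0 B s1 IH1 g a; rewrite sumr_ge0.
- by move=> G0 A0 B s1 IH1 g a; rewrite sumr_ge0.
- by move=> G0 A0 B f s1 IH1 g a; rewrite sumr_ge0 // => i _; rewrite mulr_ge0 ?kfun_ge0.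
- by move=> G0 A0 B s1 IH1 s2 IH2 g a; rewrite sumr_ge0 // => i _; rewrite mulr_ge0.
- by move=> G0 A0 c IHc s1 IH1 s2 IH2 g a; rewrite addr_ge0 ?mulr_ge0.
Qed.

Lemma plug_sem G A (s t : tm R G A) : sem s = sem t ->
  forall D B (C : ctx R G A D B), sem (plug C s) = sem (plug C t).
Proof.
move=> H D B C; elim: C => //= *;
  match goal with H : sem (plug _ s) = _ |- _ => by rewrite H end.
Qed.

Fixpoint bindAll G A (D : seq ty) : cden D -> forall B, ctx R G A D B -> ctx R G A [::] B :=
  match D return cden D -> forall B, ctx R G A D B -> ctx R G A [::] B with
  | [::] => fun _ B C => C
  | X :: D' => fun d B C => @bindAll G A D' d.2 B (clet2 (cst R D' d.1) C)
  end.

Lemma sem_bindAll G A (s : tm R G A) D (d : cden D) B (C : ctx R G A D B) b :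
  sem (plug (bindAll d C) s) tt b = sem (plug C s) d b.
Proof.
elim: D d B C b => [[] |X D IH [x d]] B C b; first by [].
rewrite IH.
change (\sum_a sem (cst R D x) d a * sem (plug C s) (a, d) b = sem (plug C s) (x, d) b).
under eq_bigr => a _ do rewrite sem_cst.
by rewrite (sum_eq1 x (fun a => sem (plug C s) (a, d) b)).
Qed.

End Main.

Section Test.
Variable R : realType.
Variables (G : seq ty) (n : nat) (g0 : cden G) (x0 : tden (TFin n)).

Definition kx : kern R (tden (TFin n)) (tden TBool) :=
  @detk R _ _ (fun a : tden (TFin n) => if a == x0 then Some btrue else None).

Definition C0 : ctx R G (TFin n) G TBool :=
  cif2 (@tprim R G TUnit TBool (coin R) (@tunit R G))
       (cprim kx (@chole R G (TFin n))) (cst R G bfalse).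

Lemma semC0 (u : tm R G (TFin n)) y :
  sem (plug C0 u) g0 y = if y == btrue then sem u g0 x0 / 2 else 2^-1.
Proof.
rewrite /= !big_unit /coinf !mulr1 /detf.
case: (eqVneq y btrue) => [->|hy].
  rewrite (bigD1 x0) //= eqxx big1 ?addr0; last by move=> a /negbTE ->; rewrite mul0r.
  by rewrite eqxx mul1r mul0r addr0.
have -> : y = bfalse.
  apply/val_inj; case: y hy => [[|[|m]] Hm] hy //=.
rewrite big1 ?mul0r ?add0r ?eqxx ?mul1r // => a _.
by case: (a == x0); rewrite mul0r.
Qed.
End Test.

Lemma sum_if2 (R : realType) (a b : R) :
  \sum_(y : tden TBool) (if y == btrue then a else b) = a + b.
Proof. by rewrite big_ord_recl big_ord1 /= addrC. Qed.

Theorem proposition6p12 (R : realType) (G : seq ty) (n : nat)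
    (s t : tm R G (TFin n)) :
  branch_equiv s t <->
  (forall (g : cden G) (x : tden (TFin n)), sem s g x = sem t g x).
Proof.
split.
- move=> H g x.
  have := H _ (bindAll g (@C0 R G n x)) btrue.
  have sumE : forall u, \sum_y sem (plug (bindAll g (@C0 R G n x)) u) tt y
      = sem u g x / 2 + 2^-1.
    move=> u; under eq_bigr => y _ do rewrite sem_bindAll semC0.
    by rewrite sum_if2.
  rewrite /normalize !sumE !sem_bindAll !semC0 eqxx.
  have ha := sem_ge0 s g x; have hb := sem_ge0 t g x.
  move: (sem s g x) (sem t g x) ha hb => a b ha hb.
  have pos : forall c : R, 0 <= c -> (c / 2 + 2^-1 == 0) = false.
    by move=> c hc; apply/negbTE; rewrite gt_eqF // ltr_wpDl ?divr_ge0 ?invr_gt0.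
  rewrite !pos // => /eqP; rewrite eqr_div ?pos // => /eqP E.
  nra.
- move=> H.
  have E : sem s = sem t.
    by apply: functional_extensionality => g; apply: functional_extensionality => x.
  by move=> B C b; rewrite /normalize (plug_sem E).
Qed.
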